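(* Let $G$ be a group, let $a,b\in G$, and let $K$ be a finite-index normal subgroup of $G$. Let $m=\deg_K(a)$ and $n=\deg_K(b)$. Suppose there exists a retraction $\rho:K\to\langle a^m\rangle$ (that is, a homomorphism $\rho:K\to\langle a^m\rangle$ restricting to the identity on $\langle a^m\rangle$) with the property that \[ \rho\big((b^{mn})^g\big)\neq a^{mn} \] for all $g\in G$. Then there exists a homomorphism $\tau$ from $G$ to a finite group such that $\tau(a)$ is not conjugate to $\tau(b)$.
   Context: For a finite-index subgroup $K$ of $G$ and $g\in G$, the degree $\deg_K(g)$ is the minimal positive integer $n$ such that $g^n\in K$. For group elements $g,h$, the notation $g^h$ means $h^{-1}gh$. *)

(* Defs.v *)
From HB Require Import structures.
From mathcomp Require Import all_boot all_algebra all_fingroup.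
Set Implicit Arguments. Unset Strict Implicit. Unset Printing Implicit Defensive.

(* An arbitrary (possibly infinite) group is a [groupType] from
   mathcomp/boot/monoid.v.  Subsets of G are predicates [G -> Prop]. *)

Local Open Scope group_scope.

Definition zpowg (G : groupType) (x : G) (z : int) : G :=
  match z with Posz n => x ^+ n | Negz n => (x ^+ n.+1)^-1 end.

Definition cyc (G : groupType) (x : G) : G -> Prop :=
  fun y => exists z : int, y = zpowg x z.

Definition is_subgroup (G : groupType) (K : G -> Prop) : Prop :=
  [/\ K 1, (forall x y, K x -> K y -> K (x * y)) & (forall x, K x -> K x^-1)].

Definition is_normal (G : groupType) (K : G -> Prop) : Prop :=
  is_subgroup K /\ forall x g, K x -> K (x ^ g).

Definition finite_index (G : groupType) (K : G -> Prop) : Prop :=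
  exists s : seq G, forall g, exists t, t \in s /\ K (t^-1 * g).

Definition is_deg (G : groupType) (K : G -> Prop) (g : G) (m : nat) : Prop :=
  [/\ (0 < m)%N, K (g ^+ m) & forall k, (0 < k < m)%N -> ~ K (g ^+ k)].

Definition is_retraction (G : groupType) (K : G -> Prop) (c : G) (rho : G -> G) : Prop :=
  [/\ (forall x, K x -> cyc c (rho x)),
      (forall x y, K x -> K y -> rho (x * y) = rho x * rho y)
    & (forall y, cyc c y -> rho y = y)].

Definition is_hom (G : groupType) (H : finGroupType) (tau : G -> H) : Prop :=
  forall x y, tau (x * y) = (tau x * tau y)%g.

(* Main.v *)
Require Import Defs.
From HB Require Import structures.
From mathcomp Require Import all_boot all_algebra all_fingroup.
From mathcomp Require Import zify.
From Stdlib Require Import Classical ClassicalEpsilon.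
Set Implicit Arguments. Unset Strict Implicit. Unset Printing Implicit Defensive.
Local Open Scope group_scope.

Module Aux.
Import GRing.Theory Num.Theory.









Section Zpow.
Variable G : groupType.
Implicit Types x y c : G.

Lemma zpowg0 x : zpowg x 0 = 1. Proof. by []. Qed.
Lemma zpowgP x (n : nat) : zpowg x n = x ^+ n. Proof. by []. Qed.

Lemma zpowgS x z : zpowg x (z + 1)%R = zpowg x z * x.
Proof.
case: z => [n|[|n]].
- have -> : (Posz n + 1)%R = Posz n.+1 by lia.
  by rewrite /= expgSr.
- by rewrite /= mulVg.
- have -> : (Negz n.+1 + 1)%R = Negz n by rewrite !NegzE; lia.
  by rewrite /= (expgS x n.+1) invgM mulgVK.
Qed.

Lemma zpowgSn x z : zpowg x (z - 1)%R = zpowg x z * x^-1.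
Proof. by rewrite -[in RHS](subrK 1%R z) zpowgS mulgK. Qed.

Lemma zpowgD x z1 z2 : zpowg x (z1 + z2)%R = zpowg x z1 * zpowg x z2.
Proof.
elim/int_rect: z2 => [|n IH|n IH].
- by rewrite addr0 mulg1.
- have -> : Posz n.+1 = (Posz n + 1)%R by lia.
  rewrite addrA !zpowgS IH mulgA; done.
- have -> : (- (n.+1)%:Z = - n%:Z - 1)%R by lia.
  by rewrite addrA !zpowgSn IH mulgA.
Qed.

Lemma zpowgN x z : zpowg x (- z)%R = (zpowg x z)^-1.
Proof. by apply/esym/mulg1_eq; rewrite -zpowgD subrr. Qed.

Lemma zpowgM x (k : nat) z : zpowg (x ^+ k) z = zpowg x (z * k)%R.
Proof.
case: z => n.
- have -> : (Posz n * k)%R = Posz (n * k) by lia.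
  by rewrite /= mulnC expgnA.
- have -> : (Negz n * k)%R = (- Posz (n.+1 * k))%R by rewrite NegzE; lia.
  by rewrite zpowgN /= mulnC expgnA.
Qed.

Lemma zpowg1 z : zpowg (1 : G) z = 1.
Proof. by case: z => n /=; rewrite expg1n ?invg1. Qed.

Lemma cyc1 c : cyc c 1. Proof. by exists 0%R. Qed.
Lemma cycM c x y : cyc c x -> cyc c y -> cyc c (x * y).
Proof. by move=> [z1 ->] [z2 ->]; exists (z1 + z2)%R; rewrite zpowgD. Qed.
Lemma cycV c x : cyc c x -> cyc c x^-1.
Proof. by move=> [z ->]; exists (- z)%R; rewrite zpowgN. Qed.
Lemma cycX c (n : nat) : cyc c (c ^+ n). Proof. by exists n. Qed.
Lemma cyc_comm c x y : cyc c x -> cyc c y -> x * y = y * x.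
Proof. by move=> [z1 ->] [z2 ->]; rewrite -!zpowgD addrC. Qed.


Lemma cyc_res c (k : nat) y : (0 < k)%N -> cyc c y ->
  exists r, (r < k)%N /\ cyc (c ^+ k) ((c ^+ r)^-1 * y).
Proof.
move=> k0 [z ->].
have kn0 : (Posz k != 0)%R by lia.
have h0 := modz_ge0 z kn0.
have h1 := ltz_pmod z (_ : (0 < Posz k)%R).
have h2 := divz_eq z k.
set q := (z %/ k)%Z in h2 *; set m := (z %% k)%Z in h0 h1 h2 *.
exists (absz m); split.
  have := h1 (ltac:(lia)). lia.
exists q; rewrite zpowgM -zpowgP -zpowgN -zpowgD; congr zpowg.
have : Posz (absz m) = m by lia.
lia.
Qed.

Lemma zpow_inj c : (forall N, (0 < N)%N -> c ^+ N != 1) ->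
  forall z, zpowg c z = 1 -> z = 0%R.
Proof.
move=> H [] n /=.
  case: n => // n e; exfalso; by move: (H n.+1 isT); rewrite e eqxx.
move=> e; exfalso; move: (H n.+1 isT).
by move: e => /(congr1 (@invg _)); rewrite invgK invg1 => ->; rewrite eqxx.
Qed.

Lemma cyc_far c y : (forall N, (0 < N)%N -> c ^+ N != 1) -> cyc c y -> y <> 1 ->
  exists k0, forall k, (k0 <= k)%N -> ~ cyc (c ^+ k) y.
Proof.
move=> inf [z ->] hne; exists (absz z).+1 => k hk [q hq].
rewrite zpowgM in hq.
have : zpowg c (z - q * k)%R = 1 by rewrite zpowgD zpowgN -hq mulgV.
move/(zpow_inj inf) => e.
apply: hne.
have ez : z = (q * k)%R by lia.
rewrite ez; move: hk; rewrite ez abszM absz_nat => hk.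
have : absz q = 0%N by nia.
by move/eqP; rewrite absz_eq0 => /eqP ->; rewrite mul0r.
Qed.

Lemma choose_k c (ts : seq G) (f : G -> G) :
  (forall t, t \in ts -> cyc c (f t) /\ f t <> 1) ->
  exists k, (0 < k)%N /\ forall t, t \in ts -> ~ cyc (c ^+ k) (f t).
Proof.
move=> H.
case: (classic (exists N, (0 < N)%N /\ c ^+ N = 1)) => [[N [N0 cN]]|nfin].
  exists N; split => // t /H [_ ne] [z hz]; apply: ne; by rewrite hz cN zpowg1.
have inf : forall N, (0 < N)%N -> c ^+ N != 1.
  by move=> N N0; apply/eqP => e; apply: nfin; exists N.
suff [k0 Hk0] : exists k0, forall k, (k0 <= k)%N -> forall t, t \in ts -> ~ cyc (c ^+ k) (f t).
  by exists k0.+1; split => //; apply: Hk0; exact: leqnSn.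
elim: ts H => [|t ts IH] H; first by exists 0.
have [k1 H1] : exists k1, forall k, (k1 <= k)%N -> forall t, t \in ts -> ~ cyc (c ^+ k) (f t).
  by apply: IH => t' ht'; apply: H; rewrite inE ht' orbT.
have [ct nt] := H t (mem_head t ts).
have [k2 H2] := cyc_far inf ct nt.
exists (maxn k1 k2) => k hk t'; rewrite inE => /orP [/eqP -> | ht'].
  by apply: H2; apply: leq_trans hk; exact: leq_maxr.
by apply: H1 => //; apply: leq_trans hk; exact: leq_maxl.
Qed.

End Zpow.
Definition decP (P : Prop) : bool := if excluded_middle_informative P then true else false.
Lemma decPP P : reflect P (decP P).
Proof. by rewrite /decP; case: excluded_middle_informative => h; constructor. Qed.

Section Quot.
Variables (G : groupType) (D : G -> Prop) (s : seq G).
Hypothesis Dsub : is_subgroup D.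
Hypothesis cover : forall g, exists t, t \in s /\ D (t^-1 * g).

Let D1 : D 1. Proof. by case: Dsub. Qed.
Let DM x y : D x -> D y -> D (x * y). Proof. by case: Dsub => _ h _; apply: h. Qed.
Let DV x : D x -> D x^-1. Proof. by case: Dsub => _ _ h; apply: h. Qed.

Lemma Dtrans x y z : D (x^-1 * y) -> D (y^-1 * z) -> D (x^-1 * z).
Proof. by move=> h1 h2; have := DM h1 h2; rewrite mulgA mulgK. Qed.
Lemma Dsym x y : D (x^-1 * y) -> D (y^-1 * x).
Proof. by move/DV; rewrite invgM invgK. Qed.
Lemma Dleft u x y : D ((u * x)^-1 * (u * y)) = D (x^-1 * y).
Proof. by rewrite invgM -mulgA mulKg. Qed.

Definition idx (x : G) : nat := find (fun t => decP (D (t^-1 * x))) s.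
Local Notation N := (size s).
Local Notation sn i := (nth 1 s i).

Lemma idx_has x : has (fun t => decP (D (t^-1 * x))) s.
Proof. by have [t [ts Dt]] := cover x; apply/hasP; exists t => //; apply/decPP. Qed.
Lemma idx_lt x : (idx x < N)%N.
Proof. by rewrite /idx -has_find idx_has. Qed.
Lemma idx_spec x : D ((sn (idx x))^-1 * x).
Proof. by apply/decPP; exact: (nth_find 1 (idx_has x)). Qed.
Lemma idx_eq x y : D (x^-1 * y) -> idx x = idx y.
Proof.
move=> h; apply: eq_find => t; apply/decPP/decPP => h'.
  exact: Dtrans h' h.
exact: Dtrans h' (Dsym h).
Qed.
Lemma idx_D x y : idx x = idx y -> D (x^-1 * y).
Proof.
move=> e; have h1 := idx_spec x; have h2 := idx_spec y; rewrite e in h1.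
exact: Dtrans (Dsym h1) h2.
Qed.

Definition canon (i : 'I_N) : bool := idx (sn i) == i.
Definition T := {i : 'I_N | canon i}.
Lemma canon_idx x : canon (Ordinal (idx_lt x)).
Proof. by apply/eqP; exact: idx_eq (idx_spec x). Qed.
Definition rep (x : G) : T := @exist _ canon _ (canon_idx x).
Definition snT (i : T) : G := sn (val (val i)).

Lemma rep_eq x y : D (x^-1 * y) -> rep x = rep y.
Proof. by move=> h; apply/val_inj/val_inj => /=; exact: idx_eq. Qed.
Lemma rep_D x y : rep x = rep y -> D (x^-1 * y).
Proof. by move/(congr1 (fun i : T => val (val i))) => /= /idx_D. Qed.
Lemma rep_snT i : rep (snT i) = i.
Proof. by apply/val_inj/val_inj => /=; apply/eqP; case: i. Qed.

Definition act (g : G) (i : T) : T := rep (g^-1 * snT i).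
Lemma act_inj g : injective (act g).
Proof.
move=> i j /rep_D; rewrite Dleft => /rep_eq.
by rewrite !rep_snT.
Qed.
Definition tau0 (g : G) : {perm T} := perm (@act_inj g).

Lemma tau0M g h : tau0 (g * h) = tau0 g * tau0 h.
Proof.
apply/permP => i; rewrite permM !permE /act.
apply: rep_eq; move: (Dsym (idx_spec (g^-1 * snT i))).
by rewrite /snT /= !invgM !invgK !mulgA mulgK.
Qed.

Lemma tau0_1 : tau0 1 = 1.
Proof. by apply/permP => i; rewrite permE perm1 /act invg1 mul1g rep_snT. Qed.

Definition Xset := [set p : {perm T} | decP (exists g, p = tau0 g)].
Lemma Xgs : group_set Xset.
Proof.
apply/group_setP; split.
  by rewrite inE; apply/decPP; exists 1; rewrite tau0_1.
move=> p q; rewrite !inE => /decPP [g ->] /decPP [h ->].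
by apply/decPP; exists (g * h); rewrite tau0M.
Qed.
Definition XG : {group {perm T}} := Group Xgs.
Lemma tau0X g : tau0 g \in XG.
Proof. by rewrite inE; apply/decPP; exists g. Qed.

Definition tauq (g : G) : subg_of XG := subg XG (tau0 g).

Lemma tauq_hom : is_hom tauq.
Proof. by move=> x y; rewrite /tauq tau0M subgM ?tau0X. Qed.

Lemma tauq_onto (h : subg_of XG) : exists g, h = tauq g.
Proof.
have := subgP h; rewrite inE => /decPP [g e]; exists g.
by rewrite /tauq -e sgvalK.
Qed.

Lemma tauq_ker x y : tauq x = tauq y -> forall u, D ((x * y^-1) ^ u).
Proof.
move/(congr1 val); rewrite /tauq !subgK ?tau0X // => e u.
pose i := rep u.
have := congr1 (fun p : {perm T} => p i) e; rewrite !permE /act => /rep_D.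
rewrite invgM invgK -mulgA mulgA => h.
have hu : D ((snT i)^-1 * u) by exact: idx_spec.
have := DM (DM (Dsym hu) h) hu.
by rewrite !mulgA !mulgK conjgE !mulgA.
Qed.

End Quot.
End Aux.
Import Aux.

Theorem lemma2p1 (G : groupType) (a b : G) (K : G -> Prop) (m n : nat)
  (rho : G -> G) :
  is_normal K -> finite_index K ->
  is_deg K a m -> is_deg K b n ->
  is_retraction K (a ^+ m) rho ->
  (forall g : G, rho ((b ^+ (m * n)) ^ g) <> a ^+ (m * n)) ->
  exists (H : finGroupType) (tau : G -> H),
    is_hom tau /\ forall h : H, tau b <> (tau a) ^ h.
Proof.
move=> [[K1 KM KV] Kn] [sK cov] [m0 Kam _] [n0 Kbn _] [rhoC rhoM rhoId] hyp.
set c := a ^+ m.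
have Kpow : forall x j, K x -> K (x ^+ j).
  by move=> x j Kx; elim: j => [|j IH]; [exact: K1 | rewrite expgS; exact: KM].
have Kc : K c by [].
have rho1 : rho 1 = 1 by apply: rhoId; exact: cyc1.
have rhoV : forall x, K x -> rho x^-1 = (rho x)^-1.
  by move=> x Kx; apply/esym/mulg1_eq; rewrite -rhoM ?mulgV ?rho1 //; exact: KV.
have rho_conj : forall x w, K x -> K w -> rho (x ^ w) = rho x.
  move=> x w Kx Kw; rewrite conjgE rhoM ?rhoM ?rhoV //; last first.
  - exact: KM.
  - exact: KV.
  by rewrite (cyc_comm (rhoC _ Kx) (rhoC _ Kw)) mulKg.
set Bmn := b ^+ (m * n).
have KB : K Bmn by rewrite /Bmn mulnC expgnA; exact: Kpow.
have acn : a ^+ (m * n) = c ^+ n by rewrite expgnA.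
pose f t := rho (Bmn ^ t) * (c ^+ n)^-1.
have [k [k0 Hk]] : exists k, (0 < k)%N /\ forall t, t \in sK -> ~ cyc (c ^+ k) (f t).
  apply: choose_k => t _; split.
    by apply: cycM; [apply: rhoC; exact: Kn | apply: cycV; exact: cycX].
  by move/divg1_eq => e; apply: (hyp t); rewrite acn.
have fg : forall g, ~ cyc (c ^+ k) (rho (Bmn ^ g) * (c ^+ n)^-1).
  move=> g; have [t [ts Kt]] := cov g.
  have -> : g = t * (t^-1 * g) by rewrite mulKVg.
  rewrite conjgM rho_conj //; last exact: Kn.
  exact: Hk.
pose D x := K x /\ cyc (c ^+ k) (rho x).
have Dsub : is_subgroup D.
  split.
  - by split; [exact: K1 | rewrite rho1; exact: cyc1].
  - by move=> x y [Kx cx] [Ky cy]; split; [exact: KM | rewrite rhoM //; exact: cycM].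
  - by move=> x [Kx cx]; split; [exact: KV | rewrite rhoV //; exact: cycV].
pose sD := [seq t * c ^+ r | t <- sK, r <- iota 0 k].
have covD : forall g, exists t, t \in sD /\ D (t^-1 * g).
  move=> g; have [t [ts Kt]] := cov g.
  have [r [rk hr]] := cyc_res k0 (rhoC _ Kt).
  exists (t * c ^+ r); split.
    by apply: allpairs_f => //; rewrite mem_iota.
  rewrite invgM -mulgA; split.
    by apply: KM => //; apply: KV; exact: Kpow.
  rewrite rhoM ?rhoV ?(rhoId _ (cycX _ _)) //.
  - exact: Kpow.
  - apply: KV; exact: Kpow.
exists (subg_of (XG Dsub covD)), (tauq Dsub covD); split.
  exact: tauq_hom.
set tau := tauq Dsub covD.
have thom : is_hom tau by exact: tauq_hom.
have t1 : tau 1 = 1.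
  by apply: (mulgI (tau 1)); rewrite -thom !mulg1.
have tV : forall g, tau g^-1 = (tau g)^-1.
  by move=> g; apply/esym/mulg1_eq; rewrite -thom mulgV t1.
move=> h e.
have [g hg] := tauq_onto h; rewrite -/tau in hg; subst h.
have e' : tau b = tau (a ^ g) by rewrite e conjgE [in RHS]conjgE !thom tV.
have Mx := tauq_ker e'.
pose M z := forall u, D (z ^ u).
set w := a ^ g in Mx e'.
set x := b * w^-1 in Mx.
have hb : b = x * w by rewrite /x mulgVK.
have [D1' DM' DV'] := Dsub.
have M1 : M 1 by move=> u; rewrite conj1g.
have MM : forall y z, M y -> M z -> M (y * z).
  by move=> y z My Mz u; rewrite conjMg; apply: DM'.
have MJ : forall y v, M y -> M (y ^ v) by move=> y v My u; rewrite -conjgM.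
have hpow : forall j, exists x', M x' /\ b ^+ j = x' * w ^+ j.
  elim=> [|j [x' [Mx' hj]]]; first by exists 1; split => //; rewrite mulg1.
  exists (x' * x ^ (w ^+ j)^-1); split; first by apply: MM => //; exact: MJ.
  by rewrite expgSr hj hb expgSr conjgE invgK !mulgA mulgVK.
have [x' [Mx' hB]] := hpow (m * n)%N.
apply: (fg g^-1).
rewrite /Bmn hB /w -conjXg conjMg conjgK acn.
have [Ky cy] : D (x' ^ g^-1) by have := Mx' g^-1.
rewrite rhoM ?(rhoId _ (cycX _ _)) ?mulgK //; exact: Kpow.
Qed.
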